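(* Let $D$ be an integral domain and $\star$ a semistar operation on $D$. The following are equivalent: (i) for every overring $T$ of $D$ and every semistar operation $\star'$ on $T$, $T$ is $(\star,\star')$-linked to $D$; (ii) every overring $T$ of $D$ is $(\star,d_T)$-linked to $D$; (iii) every overring $T$ of $D$ is $t$-linked to $(D,\star)$; (iv) for every valuation overring $V$ of $D$ there is a semistar operation $\ast_V$ on $V$ with $V^{\ast_V}=V$ such that $V$ is $(\star,\ast_V)$-linked to $D$; (v) every maximal ideal of $D$ is a quasi-$\star_f$-maximal ideal; (vi) for every proper ideal $I$ of $D$, $I^{\star_f}\subsetneq D^\star$; (vii) for every proper finitely generated ideal $I$ of $D$, $I^\star\subsetneq D^\star$; (viii) for every proper $\star_f$-invertible ideal $I$ of $D$ (i.e. $(II^{-1})^{\star_f}=D^\star$, where $I^{-1}=(D:_KI)$), $I^{\star_f}\subsetneq D^\star$.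
   Context: Let $D$ be an integral domain with quotient field $K$. $\overline{\mathbf F}(D)$ denotes the set of all nonzero $D$-submodules of $K$ and $\mathbf f(D)$ the set of nonzero finitely generated $D$-submodules of $K$. A semistar operation on $D$ is a map $\star:\overline{\mathbf F}(D)\to\overline{\mathbf F}(D)$, $E\mapsto E^\star$, such that for all $0\ne x\in K$ and $E,F\in\overline{\mathbf F}(D)$: (1) $(xE)^\star=xE^\star$; (2) $E\subseteq F\Rightarrow E^\star\subseteq F^\star$; (3) $E\subseteq E^\star$ and $(E^\star)^\star=E^\star$. $\star_f$ is defined by $E^{\star_f}=\bigcup\{F^\star:F\in\mathbf f(D),F\subseteq E\}$. A nonzero ideal $I$ of $D$ is a quasi-$\star$-ideal if $I^\star\cap D=I$; a quasi-$\star$-maximal ideal is a maximal element among proper quasi-$\star$-ideals. An overring of $D$ is a ring $T$ with $D\subseteq T\subseteq K$; semistar operations on $T$ are defined likewise. $d_T$ denotes the identity operation on $T$; $v_T$ is $E\mapsto(T:_K(T:_KE))$ and $t_T:=(v_T)_f$. If $\star'$ is a semistar operation on $T$, $T$ is $(\star,\star')$-linked to $D$ if for every nonzero finitely generated ideal $F\subseteq D$ with $F^\star=D^\star$ one has $(FT)^{\star'}=T^{\star'}$; $T$ is $t$-linked to $(D,\star)$ if it is $(\star,t_T)$-linked to $D$. *)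

(* Defs.v *)
(* Subsets of the field K are predicates K -> Prop; equality of
   subsets is Leibniz equality (funext/propext are available). *)
From mathcomp Require Import all_boot all_order all_algebra.
Set Implicit Arguments. Unset Strict Implicit. Unset Printing Implicit Defensive.
Import GRing.Theory.
Local Open Scope ring_scope.

Section Defs.
Variable K : fieldType.

Definition ksubset (A B : K -> Prop) := forall x, A x -> B x.
Definition kstrict_subset (A B : K -> Prop) := ksubset A B /\ A <> B.

Definition subring (R : K -> Prop) :=
  [/\ R 0, R 1, (forall x y, R x -> R y -> R (x - y))
    & (forall x y, R x -> R y -> R (x * y))].

Definition domain_with_qf (D : K -> Prop) :=
  subring D /\
  forall x : K, exists a b, [/\ D a, D b, b != 0 & x = a / b].

Definition submodule (R E : K -> Prop) :=
  [/\ E 0, (forall x y, E x -> E y -> E (x + y))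
    & (forall r x, R r -> E x -> E (r * x))].
Definition nonzero (E : K -> Prop) := exists x, E x /\ x != 0.
Definition Fbar (R E : K -> Prop) := submodule R E /\ nonzero E.

Definition fspan (R : K -> Prop) (s : seq K) : K -> Prop :=
  fun x => exists c : nat -> K,
    (forall i, R (c i)) /\ x = \sum_(i < size s) c i * s`_i.
Definition fin_gen (R E : K -> Prop) := exists s : seq K, E = fspan R s.

Definition kscale (x : K) (E : K -> Prop) : K -> Prop :=
  fun y => exists e, E e /\ y = x * e.

Definition prodm (E F : K -> Prop) : K -> Prop :=
  fun x => exists (n : nat) (a b : nat -> K),
    [/\ forall i, E (a i), forall i, F (b i) & x = \sum_(i < n) a i * b i].

Definition colon (T E : K -> Prop) : K -> Prop :=
  fun x => forall e, E e -> T (x * e).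

Record semistar (R : K -> Prop) (st : (K -> Prop) -> (K -> Prop)) : Prop := {
  ss_Fbar : forall E, Fbar R E -> Fbar R (st E);
  ss_scale : forall x E, x != 0 -> Fbar R E -> st (kscale x E) = kscale x (st E);
  ss_mono : forall E F, Fbar R E -> Fbar R F -> ksubset E F -> ksubset (st E) (st F);
  ss_ext : forall E, Fbar R E -> ksubset E (st E);
  ss_idem : forall E, Fbar R E -> st (st E) = st E }.

Definition star_f (R : K -> Prop) (st : (K -> Prop) -> (K -> Prop)) (E : K -> Prop) :
  K -> Prop :=
  fun x => exists F, [/\ Fbar R F, fin_gen R F, ksubset F E & st F x].

Definition d_op (E : K -> Prop) : K -> Prop := E.
Definition v_op (T : K -> Prop) (E : K -> Prop) : K -> Prop := colon T (colon T E).
Definition t_op (T : K -> Prop) := star_f T (v_op T).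

Definition kideal (D I : K -> Prop) := submodule D I /\ ksubset I D.
Definition kproper (D I : K -> Prop) := ~ ksubset D I.
Definition maximal_ideal (D M : K -> Prop) :=
  [/\ kideal D M, kproper D M &
      forall I, kideal D I -> kproper D I -> ksubset M I -> I = M].

Definition quasi_ideal (D : K -> Prop) (st : (K -> Prop) -> (K -> Prop)) I :=
  [/\ kideal D I, nonzero I & (fun x => st I x /\ D x) = I].
Definition quasi_maximal (D : K -> Prop) (st : (K -> Prop) -> (K -> Prop)) M :=
  [/\ quasi_ideal D st M, kproper D M &
      forall I, quasi_ideal D st I -> kproper D I -> ksubset M I -> I = M].

Definition overring (D T : K -> Prop) := subring T /\ ksubset D T.
Definition valuation_overring (D V : K -> Prop) :=
  overring D V /\ forall x : K, x != 0 -> V x \/ V (x^-1).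

Definition linked (D : K -> Prop) (st : (K -> Prop) -> (K -> Prop))
  (T : K -> Prop) (st' : (K -> Prop) -> (K -> Prop)) :=
  forall F, kideal D F -> nonzero F -> fin_gen D F -> st F = st D ->
    st' (prodm F T) = st' T.

End Defs.

(* Main.v *)
Require Import Defs.
From mathcomp Require Import all_boot all_order all_algebra.
From mathcomp Require classical_sets.
From mathcomp Require Import ring zify.
From Stdlib Require Import Classical FunctionalExtensionality PropExtensionality.
Set Implicit Arguments. Unset Strict Implicit. Unset Printing Implicit Defensive.
Import GRing.Theory.
Local Open Scope ring_scope.

Lemma predext (K : Type) (A B : K -> Prop) :
  (forall x, A x -> B x) -> (forall x, B x -> A x) -> A = B.
Proof.
move=> h1 h2; apply: functional_extensionality => x.
by apply: propositional_extensionality; split; [apply: h1|apply: h2].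
Qed.



Lemma sr0 (K : fieldType) (R : K -> Prop) : subring R -> R 0.
Proof. by case. Qed.
Lemma sr1 (K : fieldType) (R : K -> Prop) : subring R -> R 1.
Proof. by case. Qed.
Lemma srB (K : fieldType) (R : K -> Prop) x y : subring R -> R x -> R y -> R (x - y).
Proof. by case=> _ _ h _; apply: h. Qed.
Lemma srM (K : fieldType) (R : K -> Prop) x y : subring R -> R x -> R y -> R (x * y).
Proof. by case=> _ _ _ h; apply: h. Qed.
Lemma srN (K : fieldType) (R : K -> Prop) x : subring R -> R x -> R (- x).
Proof. by move=> hR hx; rewrite -sub0r; apply: srB => //; apply: sr0. Qed.
Lemma srD (K : fieldType) (R : K -> Prop) x y : subring R -> R x -> R y -> R (x + y).
Proof. by move=> hR hx hy; rewrite -[y]opprK; apply: srB => //; apply: srN. Qed.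

Lemma sr_submod (K : fieldType) (R : K -> Prop) : subring R -> submodule R R.
Proof.
move=> hR; split; first exact: sr0.
- by move=> x y; apply: srD.
- by move=> r x; apply: srM.
Qed.

Lemma sr_Fbar (K : fieldType) (R : K -> Prop) : subring R -> Fbar R R.
Proof.
move=> hR; split; first exact: sr_submod.
by exists 1; split; [apply: sr1|apply: oner_neq0].
Qed.

Lemma sm0 (K : fieldType) (R E : K -> Prop) : submodule R E -> E 0.
Proof. by case. Qed.
Lemma smD (K : fieldType) (R E : K -> Prop) x y : submodule R E -> E x -> E y -> E (x + y).
Proof. by case=> _ h _; apply: h. Qed.
Lemma smM (K : fieldType) (R E : K -> Prop) r x : submodule R E -> R r -> E x -> E (r * x).
Proof. by case=> _ _ h; apply: h. Qed.

Lemma sm_sum (K : fieldType) (E : K -> Prop) (n : nat) (f : 'I_n -> K) :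
  E 0 -> (forall x y, E x -> E y -> E (x + y)) -> (forall i, E (f i)) ->
  E (\sum_(i < n) f i).
Proof. by move=> h0 hD hf; apply: big_ind => // i _; apply: hf. Qed.

Lemma fspan_sub (K : fieldType) (R E : K -> Prop) (s : seq K) :
  submodule R E -> (forall y, y \in s -> E y) -> ksubset (fspan R s) E.
Proof.
move=> hE hs x [c [hc ->]]; apply: sm_sum.
- exact: sm0 hE.
- by move=> a b; apply: (smD hE).
- by move=> i; apply: smM hE (hc i) (hs _ (mem_nth 0 (ltn_ord i))).
Qed.

Lemma fspan_submod (K : fieldType) (R : K -> Prop) (s : seq K) :
  subring R -> submodule R (fspan R s).
Proof.
move=> hR; split.
- exists (fun _ => 0); split; first by move=> _; apply: sr0.
  by rewrite big1 // => i _; rewrite mul0r.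
- move=> x y [c [hc ->]] [d [hd ->]]; exists (fun i => c i + d i); split.
    by move=> i; apply: srD.
  by rewrite -big_split /=; apply: eq_bigr => i _; rewrite mulrDl.
- move=> r x hr [c [hc ->]]; exists (fun i => r * c i); split.
    by move=> i; apply: srM.
  by rewrite mulr_sumr; apply: eq_bigr => i _; rewrite mulrA.
Qed.

Lemma fspan_mem (K : fieldType) (R : K -> Prop) (s : seq K) y :
  subring R -> y \in s -> fspan R s y.
Proof.
move=> hR ys; have hi : (index y s < size s)%N by rewrite index_mem.
exists (fun k : nat => if k == index y s then 1 else 0); split.
  by move=> k; case: ifP => _; [apply: sr1|apply: sr0].
rewrite (bigD1 (Ordinal hi)) //= eqxx mul1r nth_index // big1 ?addr0 //.
move=> j hj; case: ifP; last by rewrite mul0r.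
by move/eqP=> e; move: hj; rewrite -val_eqE /= e eqxx.
Qed.

Lemma fspan_Fbar (K : fieldType) (R : K -> Prop) (s : seq K) y :
  subring R -> y \in s -> y != 0 -> Fbar R (fspan R s).
Proof.
move=> hR ys y0; split; first exact: fspan_submod.
by exists y; split => //; apply: fspan_mem.
Qed.

Lemma fspan_zero (K : fieldType) (R : K -> Prop) (s : seq K) x :
  (forall y, y \in s -> y = 0) -> fspan R s x -> x = 0.
Proof.
move=> hs [c [_ ->]]; rewrite big1 // => i _.
by rewrite (hs _ (mem_nth 0 (ltn_ord i))) mulr0.
Qed.

Lemma fspan_nonzero (K : fieldType) (R : K -> Prop) (s : seq K) :
  nonzero (fspan R s) -> exists y, y \in s /\ y != 0.
Proof.
move=> [x [hx x0]]; apply: NNPP => hn; move: x0.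
have -> : x = 0.
  apply: (fspan_zero (R := R) (s := s)) hx => y ys.
  by apply: NNPP => y0; apply: hn; exists y; split => //; apply/eqP.
by rewrite eqxx.
Qed.

Lemma prodm0 (K : fieldType) (E F : K -> Prop) : E 0 -> F 0 -> prodm E F 0.
Proof.
by move=> h1 h2; exists 0%N, (fun _ => 0), (fun _ => 0); split => //; rewrite big_ord0.
Qed.

Lemma prodm_add (K : fieldType) (E F : K -> Prop) x y :
  prodm E F x -> prodm E F y -> prodm E F (x + y).
Proof.
move=> [n [a [b [ha hb ->]]]] [m [a' [b' [ha' hb' ->]]]].
exists (n + m)%N, (fun i => if (i < n)%N then a i else a' (i - n)%N),
  (fun i => if (i < n)%N then b i else b' (i - n)%N); split.
- by move=> i; case: ifP.
- by move=> i; case: ifP.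
rewrite big_split_ord /=; congr (_ + _); apply: eq_bigr => i _ /=.
  by rewrite ltn_ord.
by rewrite ltnNge leq_addr /= addKn.
Qed.

Lemma prodm_mulr (K : fieldType) (E T : K -> Prop) y v :
  subring T -> prodm E T y -> T v -> prodm E T (y * v).
Proof.
move=> hT [n [a [b [ha hb ->]]]] hv.
exists n, a, (fun i => b i * v); split => //.
  by move=> i; apply: srM.
by rewrite mulr_suml; apply: eq_bigr => i _; rewrite mulrA.
Qed.

Lemma prodm_mul (K : fieldType) (E T : K -> Prop) a b :
  E a -> T b -> prodm E T (a * b).
Proof.
move=> ha hb; exists 1%N, (fun _ => a), (fun _ => b); split => //.
by rewrite big_ord1.
Qed.

Lemma prodm_submod (K : fieldType) (E T : K -> Prop) :
  E 0 -> subring T -> submodule T (prodm E T).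
Proof.
move=> hE hT; split; first by apply: prodm0 => //; apply: sr0.
- by move=> x y; apply: prodm_add.
- by move=> r x hr hx; rewrite mulrC; apply: prodm_mulr.
Qed.

Lemma prodm_sub (K : fieldType) (E T G : K -> Prop) :
  submodule T G -> ksubset E G -> ksubset (prodm E T) G.
Proof.
move=> hG hEG x [n [a [b [ha hb ->]]]]; apply: sm_sum.
- exact: sm0 hG.
- by move=> u w; apply: (smD hG).
- by move=> i; rewrite mulrC; apply: smM hG (hb i) (hEG _ (ha i)).
Qed.

Definition P7 (K : fieldType) (D : K -> Prop) (st : (K -> Prop) -> (K -> Prop)) :=
  forall I, kideal D I -> nonzero I -> kproper D I -> fin_gen D I ->
      kstrict_subset (st I) (st D).

Lemma kideal_Fbar (K : fieldType) (D I : K -> Prop) :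
  kideal D I -> nonzero I -> Fbar D I.
Proof. by case=> h _ hn; split. Qed.

Lemma st_le_D (K : fieldType) (D : K -> Prop) st F :
  subring D -> semistar D st -> Fbar D F -> ksubset F D -> ksubset (st F) (st D).
Proof. by move=> hD hst hF hFD; apply: (ss_mono hst) => //; apply: sr_Fbar. Qed.

Lemma st_one (K : fieldType) (D : K -> Prop) st F :
  subring D -> semistar D st -> Fbar D F -> ksubset F D -> st F 1 -> st F = st D.
Proof.
move=> hD hst hF hFD h1; apply: predext; first exact: st_le_D.
have hsF := ss_Fbar hst hF.
have hDs : ksubset D (st F).
  by move=> d hd; rewrite -[d]mulr1; apply: smM hsF.1 hd h1.
move=> x hx; rewrite -(ss_idem hst hF).
by apply: (ss_mono hst) (sr_Fbar hD) hsF hDs _ hx.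
Qed.

Lemma fin_gen_fspan (K : fieldType) (D : K -> Prop) s : fin_gen D (fspan D s).
Proof. by exists s. Qed.

Lemma starf_fg (K : fieldType) (D : K -> Prop) st I :
  subring D -> semistar D st -> Fbar D I -> fin_gen D I -> star_f D st I = st I.
Proof.
move=> hD hst hI hg; apply: predext.
  by move=> x [F [hF _ hFI hx]]; apply: (ss_mono hst) hF hI hFI _ hx.
by move=> x hx; exists I; split.
Qed.

Lemma key7 (K : fieldType) (D : K -> Prop) st E :
  P7 D st -> subring D -> semistar D st -> kideal D E -> kproper D E ->
  ~ star_f D st E 1.
Proof.
move=> h7 hD hst hE hpE [F [hF hg hFE h1]].
have hFD : ksubset F D by move=> x /hFE; apply: hE.2.
have eq := st_one hD hst hF hFD h1.
have [_ ne] := h7 F (conj hF.1 hFD) hF.2 (fun h => hpE (fun x hx => hFE _ (h _ hx))) hg.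
exact: ne.
Qed.

Lemma P7_eq (K : fieldType) (D : K -> Prop) st F :
  P7 D st -> kideal D F -> nonzero F -> fin_gen D F -> st F = st D -> ksubset D F.
Proof.
move=> h7 hF hn hg e; apply: NNPP => hp.
by have [_ ne] := h7 F hF hn hp hg; apply: ne.
Qed.

Lemma starf_ext (K : fieldType) (D : K -> Prop) st E :
  subring D -> semistar D st -> submodule D E -> nonzero E ->
  ksubset E (star_f D st E).
Proof.
move=> hD hst hE [m [hm m0]] x hx; exists (fspan D [:: m; x]); split.
- by apply: (fspan_Fbar (y := m)) => //; rewrite inE eqxx.
- exact: fin_gen_fspan.
- by apply: fspan_sub => // y; rewrite !inE => /orP[] /eqP ->.
- apply: (ss_ext hst); first by apply: (fspan_Fbar (y := m)) => //; rewrite inE eqxx.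
  by apply: fspan_mem => //; rewrite !inE eqxx orbT.
Qed.

Lemma starf_le (K : fieldType) (D : K -> Prop) st E :
  subring D -> semistar D st -> ksubset E D -> ksubset (star_f D st E) (st D).
Proof.
move=> hD hst hED x [F [hF _ hFE hx]].
by apply: st_le_D hF _ _ hx => // y /hFE /hED.
Qed.

Lemma starf_mono (K : fieldType) (D : K -> Prop) st E E' :
  ksubset E E' -> ksubset (star_f D st E) (star_f D st E').
Proof.
move=> h x [F [hF hg hFE hx]]; exists F; split => //.
by move=> y /hFE /h.
Qed.

Lemma starf_submod (K : fieldType) (D : K -> Prop) st E :
  subring D -> semistar D st -> submodule D E -> nonzero E ->
  submodule D (star_f D st E).
Proof.
move=> hD hst hE hn; split.
- by apply: starf_ext => //; apply: sm0 hE.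
- move=> x y [F1 [hF1 [s1 e1] hF1E hx]] [F2 [hF2 [s2 e2] hF2E hy]].
  have [m [hm m0]] := hF1.2.
  set G := fspan D (s1 ++ s2).
  have sF1G : ksubset F1 G.
    rewrite e1; apply: fspan_sub; first exact: fspan_submod.
    by move=> z zs; apply: fspan_mem => //; rewrite mem_cat zs.
  have sF2G : ksubset F2 G.
    rewrite e2; apply: fspan_sub; first exact: fspan_submod.
    by move=> z zs; apply: fspan_mem => //; rewrite mem_cat zs orbT.
  have hG : Fbar D G.
    by split; [exact: fspan_submod | exists m; split => //; apply: sF1G].
  have sGE : ksubset G E.
    apply: fspan_sub => // z; rewrite mem_cat => /orP[] zs.
      by apply: hF1E; rewrite e1; apply: fspan_mem.
    by apply: hF2E; rewrite e2; apply: fspan_mem.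
  exists G; split => //; first exact: fin_gen_fspan.
  apply: (smD (ss_Fbar hst hG).1).
    by apply: (ss_mono hst) hF1 hG sF1G _ hx.
  by apply: (ss_mono hst) hF2 hG sF2G _ hy.
- move=> r x hr [F [hF hg hFE hx]]; exists F; split => //.
  by apply: smM (ss_Fbar hst hF).1 hr hx.
Qed.

Lemma prodm_D (K : fieldType) (D T : K -> Prop) :
  subring D -> subring T -> ksubset D T -> prodm D T = T.
Proof.
move=> hD hT hDT; apply: predext; first exact: prodm_sub (sr_submod hT) hDT.
by move=> t ht; rewrite -[t]mul1r; apply: prodm_mul => //; apply: sr1.
Qed.

Lemma d_semistar (K : fieldType) (T : K -> Prop) : semistar T (@d_op K).
Proof. by constructor; rewrite /d_op /ksubset. Qed.

Lemma H1 (K : fieldType) (D : K -> Prop) st :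
  subring D -> semistar D st -> P7 D st ->
  forall T, overring D T -> forall st', semistar T st' -> linked D st T st'.
Proof.
move=> hD hst h7 T [hT hDT] st' _ F hF hn hg e.
have -> : F = D by apply: predext; [apply: hF.2 | apply: P7_eq h7 hF hn hg e].
by rewrite prodm_D.
Qed.

Lemma H2 (K : fieldType) (D : K -> Prop) st :
  subring D -> semistar D st -> P7 D st ->
  forall M, maximal_ideal D M -> nonzero M -> quasi_maximal D (star_f D st) M.
Proof.
move=> hD hst h7 M [hM hpM hmax] hnM.
have hsub := starf_submod hD hst hM.1 hnM.
have hJ : (fun x => star_f D st M x /\ D x) = M.
  apply: hmax.
  - split; last by move=> x [].
    split.
    + by split; [apply: sm0 hsub | apply: sr0].
    + by move=> x y [h1 h2] [h3 h4]; split; [apply: smD hsub h1 h3 | apply: srD].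
    + by move=> r x hr [h1 h2]; split; [apply: smM hsub hr h1 | apply: srM].
  - move=> hDJ; apply: (key7 h7 hD hst hM hpM).
    by have [] := hDJ 1 (sr1 hD).
  - by move=> x hx; split; [apply: starf_ext hM.1 hnM _ hx | apply: hM.2].
split; [by split | by [] | ].
by move=> I [hI _ _] hpI hMI; apply: hmax.
Qed.

Lemma H3 (K : fieldType) (D : K -> Prop) st :
  subring D -> semistar D st -> P7 D st ->
  forall I, kideal D I -> nonzero I -> kproper D I ->
      kstrict_subset (star_f D st I) (st D).
Proof.
move=> hD hst h7 I hI hn hp; split; first exact: starf_le hI.2.
move=> e; apply: (key7 h7 hD hst hI hp); rewrite e.
by apply: (ss_ext hst) (sr_Fbar hD) _ (sr1 hD).
Qed.

Lemma H4 (K : fieldType) (D : K -> Prop) st :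
  subring D -> semistar D st ->
  (forall I, kideal D I -> nonzero I -> kproper D I ->
      star_f D st (prodm I (colon D I)) = st D ->
      kstrict_subset (star_f D st I) (st D)) -> P7 D st.
Proof.
move=> hD hst h8 I hI hn hp hg; have hF := kideal_Fbar hI hn.
split; first exact: st_le_D hI.2.
move=> e; have e2 := starf_fg hD hst hF hg.
have hinv : star_f D st (prodm I (colon D I)) = st D.
  apply: predext.
    apply: starf_le => // x [n [a [b [ha hb ->]]]]; apply: sm_sum.
    - exact: sr0.
    - by move=> u v; apply: srD.
    - by move=> i; rewrite mulrC; apply: hb.
  move=> x; rewrite -e => hx; exists I; split => //.
  by move=> y hy; rewrite -[y]mulr1; apply: prodm_mul => // z hz; rewrite mul1r; apply: hI.2.
have [_ ne] := h8 I hI hn hp hinv; apply: ne.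
by rewrite e2 e.
Qed.

Lemma H8 (K : fieldType) (D : K -> Prop) st :
  subring D -> semistar D st ->
  (forall I, kideal D I -> nonzero I -> kproper D I ->
      kstrict_subset (star_f D st I) (st D)) -> P7 D st.
Proof.
move=> hD hst h6 I hI hn hp hg.
by rewrite -(starf_fg hD hst (kideal_Fbar hI hn) hg); apply: h6.
Qed.

Lemma kscale_submod (K : fieldType) (V : K -> Prop) x :
  subring V -> submodule V (kscale x V).
Proof.
move=> hV; split.
- by exists 0; split; [apply: sr0 | rewrite mulr0].
- move=> a b [e1 [h1 ->]] [e2 [h2 ->]]; exists (e1 + e2); split.
    exact: srD.
  by rewrite mulrDr.
- move=> r a hr [e [he ->]]; exists (r * e); split.
    exact: srM.
  by rewrite mulrCA.
Qed.

Lemma submod_restrict (K : fieldType) (D V E : K -> Prop) :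
  submodule V E -> ksubset D V -> submodule D E.
Proof.
case=> h0 hD hM hDV; split => // r x hr; apply: hM; exact: hDV.
Qed.

Lemma maxgen (K : fieldType) (V : K -> Prop) :
  subring V -> (forall x : K, x != 0 -> V x \/ V (x^-1)) ->
  forall s : seq K, (exists y, y \in s /\ y != 0) ->
  exists x, [/\ x \in s, x != 0 & forall y, y \in s -> kscale x V y].
Proof.
move=> hV hval; elim=> [|a s IH] hex.
  by case: hex => y []; rewrite in_nil.
case: (classic (exists y, y \in s /\ y != 0)) => [hs|hs].
  have [x [xs x0 hx]] := IH hs.
  case: (eqVneq a 0) => [a0|a0].
    exists x; split => //; first by rewrite inE xs orbT.
    move=> y; rewrite inE => /orP[/eqP ->|ys]; last exact: hx.
    by exists 0; split; [apply: sr0 | rewrite a0 mulr0].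
  have ax0 : a / x != 0 by rewrite mulf_neq0 // invr_eq0.
  case: (hval _ ax0) => hax.
    exists x; split => //; first by rewrite inE xs orbT.
    move=> y; rewrite inE => /orP[/eqP ->|ys]; last exact: hx.
    by exists (a / x); split => //; rewrite mulrC divfK.
  rewrite invf_div in hax.
  exists a; split => //; first by rewrite inE eqxx.
  move=> y; rewrite inE => /orP[/eqP ->|ys].
    by exists 1; split; [apply: sr1 | rewrite mulr1].
  have [e [he ->]] := hx _ ys.
  exists (x / a * e); split; first exact: srM.
  by rewrite mulrA [a * _]mulrC divfK.
have a0 : a != 0.
  case: hex => y [/[1!inE] /orP[/eqP ->//|ys] y0].
  by case: hs; exists y.
exists a; split => //; first by rewrite inE eqxx.
move=> y; rewrite inE => /orP[/eqP ->|ys].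
  by exists 1; split; [apply: sr1 | rewrite mulr1].
have -> : y = 0.
  by apply: NNPP => y0; apply: hs; exists y; split => //; apply/eqP.
by exists 0; split; [apply: sr0 | rewrite mulr0].
Qed.

Lemma prodm_scale (K : fieldType) (D V : K -> Prop) (s : seq K) x :
  subring V -> ksubset D V -> (forall y, y \in s -> kscale x V y) ->
  ksubset (prodm (fspan D s) V) (kscale x V).
Proof.
move=> hV hDV hs; apply: prodm_sub; first exact: kscale_submod.
apply: fspan_sub => //; apply: submod_restrict hDV; exact: kscale_submod.
Qed.

Lemma fin_gen_self (K : fieldType) (V : K -> Prop) : subring V -> fin_gen V V.
Proof.
move=> hV; exists [:: 1]; apply: predext.
  move=> v hv; exists (fun _ => v); split => //.
  by rewrite big_ord1 /= mulr1.
by apply: fspan_sub; [exact: sr_submod | move=> y; rewrite inE => /eqP ->; apply: sr1].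
Qed.

Lemma prodm_full (K : fieldType) (D F V : K -> Prop) :
  subring V -> ksubset D V -> ksubset F D -> prodm F V 1 -> prodm F V = V.
Proof.
move=> hV hDV hFD h1; apply: predext.
  by apply: prodm_sub; [exact: sr_submod | move=> y /hFD /hDV].
by move=> v hv; rewrite -[v]mul1r; apply: prodm_mulr.
Qed.

Lemma H5 (K : fieldType) (D : K -> Prop) st :
  subring D ->
  (forall T, overring D T -> linked D st T (t_op T)) ->
  forall V, valuation_overring D V ->
      exists sV, [/\ semistar V sV, sV V = V & linked D st V sV].
Proof.
move=> hD h3 V [[hV hDV] hval]; exists (@d_op K); split => //.
  exact: d_semistar.
move=> F hF hn [s es] e.
have eq := h3 V (conj hV hDV) F hF hn (ex_intro _ s es) e.
have h1 : t_op V V 1.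
  exists V; split => //; [exact: sr_Fbar | exact: fin_gen_self |].
  move=> c hc; rewrite mul1r; have := hc 1 (sr1 hV); by rewrite mulr1.
rewrite -eq in h1; case: h1 => G [hG hgG hGF hv].
have hne : exists y, y \in s /\ y != 0.
  by apply: (fspan_nonzero (R := D)); rewrite -es.
have [x [xs x0 hx]] := maxgen hV hval hne.
have hsub : ksubset (prodm F V) (kscale x V) by rewrite es; apply: prodm_scale.
have hxi : V x^-1.
  have := hv x^-1; rewrite mul1r; apply => g /hGF /hsub [w [hw ->]].
  by rewrite mulKf.
rewrite /d_op; apply: (prodm_full hV hDV hF.2).
rewrite -(mulfV x0); apply: prodm_mul => //.
by rewrite es; apply: fspan_mem.
Qed.

Lemma zorn_sets (T : Type) (P : (T -> Prop) -> Prop) (X0 : T -> Prop) :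
  P X0 ->
  (forall C : (T -> Prop) -> Prop, (forall X, C X -> P X) ->
     (forall X Y, C X -> C Y -> (forall t, X t -> Y t) \/ (forall t, Y t -> X t)) ->
     (exists X, C X) ->
     P (fun t => exists X, C X /\ X t)) ->
  exists M, P M /\ forall B, P B -> (forall t, M t -> B t) -> B = M.
Proof.
move=> hX0 hch.
pose P' (X : T -> Prop) := (forall t, ~ X t) \/ P X.
have [M [hM hmax]] : exists A, P' A /\ (forall B, classical_sets.proper A B -> ~ P' B).
  apply: classical_sets.Zorn_bigcup => C hC htot.
  case: (classic (exists X, C X /\ P X)) => [[X1 [hX1 hPX1]]|hno].
    right.
    have hU := hch (fun X => C X /\ P X) (fun X h => h.2)
      (fun X Y hX hY => htot X Y hX.1 hY.1) (ex_intro _ X1 (conj hX1 hPX1)).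
    have -> : classical_sets.bigcup C id = (fun t => exists X, (C X /\ P X) /\ X t).
      apply: predext => t.
        case=> X hX hXt; exists X; split => //; split => //.
        by case: (hC X hX) => // h; case: (h t).
      by case=> X [[hX _] hXt]; exists X.
    exact: hU.
  left => t [X hX hXt]; case: (hC X hX) => h; first exact: (h t).
  by apply: hno; exists X.
have PM : P M.
  case: hM => // hM.
  case: (classic (exists t, X0 t)) => [[t0 ht0]|hne].
    exfalso; apply: (hmax X0); last by right.
    by split; [move=> t /hM | move=> h; apply: (hM t0); apply: h].
  have -> : M = X0.
    by apply: predext => t ht; [case: (hM t) | case: hne; exists t].
  exact: hX0.
exists M; split => // B PB MB; apply: NNPP => ne.
apply: (hmax B); last by right.
split => // BM; apply: ne; apply: predext => //.
Qed.

Lemma proper_one (K : fieldType) (D J : K -> Prop) :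
  subring D -> kideal D J -> (kproper D J <-> ~ J 1).
Proof.
move=> hD hJ; split => hp.
  by move=> h1; apply: hp => d hd; rewrite -[d]mulr1; apply: smM hJ.1 hd h1.
by move=> h; apply: hp; apply: h; apply: sr1 hD.
Qed.

Lemma krull (K : fieldType) (D I : K -> Prop) :
  subring D -> kideal D I -> kproper D I ->
  exists M, maximal_ideal D M /\ ksubset I M.
Proof.
move=> hD hI hpI.
pose P (X : K -> Prop) := [/\ kideal D X, ksubset I X & ~ X 1].
have [M [[hM hIM hM1] hmax]] : exists M, P M /\ forall B, P B -> (forall t, M t -> B t) -> B = M.
  apply: (zorn_sets (X0 := I)).
    by split => //; apply/(proper_one hD hI).
  move=> C hC htot [X1 hX1].
  have hcomb : forall x y, (exists X, C X /\ X x) -> (exists X, C X /\ X y) ->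
      exists X, [/\ C X, X x & X y].
    move=> x y [X [hX hx]] [Y [hY hy]].
    by case: (htot X Y hX hY) => h; [exists Y; split => //; apply: h | exists X; split => //; apply: h].
  split.
  - split; last by move=> x [X [hX hx]]; have [[_ h] _ _] := hC X hX; apply: h.
    split.
    + by exists X1; split => //; have [[h _] _ _] := hC X1 hX1; apply: sm0 h.
    + move=> x y hx hy; have [X [hX h1 h2]] := hcomb _ _ hx hy.
      by exists X; split => //; have [[h _] _ _] := hC X hX; apply: smD h h1 h2.
    + move=> r x hr [X [hX hx]]; exists X; split => //.
      by have [[h _] _ _] := hC X hX; apply: smM h hr hx.
  - by move=> x hx; exists X1; split => //; have [_ h _] := hC X1 hX1; apply: h.
  - by move=> [X [hX h1]]; have [_ _ h] := hC X hX; apply: h.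
exists M; split => //; split => //; first by apply/(proper_one hD hM).
move=> J hJ hpJ hMJ; apply: hmax => //; split => //.
  by move=> x /hIM /hMJ.
by apply/(proper_one hD hJ).
Qed.

Lemma H7 (K : fieldType) (D : K -> Prop) st :
  subring D -> semistar D st ->
  (forall M, maximal_ideal D M -> nonzero M -> quasi_maximal D (star_f D st) M) ->
  (forall I, kideal D I -> nonzero I -> kproper D I ->
      kstrict_subset (star_f D st I) (st D)).
Proof.
move=> hD hst h5 I hI hn hp; split; first exact: starf_le hI.2.
move=> e; have [M [hMax hIM]] := krull hD hI hp.
have hnM : nonzero M by case: hn => x [hx x0]; exists x; split => //; apply: hIM.
have [[_ _ hq] hpM _] := h5 M hMax hnM.
have h1 : star_f D st I 1 by rewrite e; apply: (ss_ext hst) (sr_Fbar hD) _ (sr1 hD).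
have hM1 : M 1 by rewrite -hq; split; [apply: starf_mono hIM _ h1 | apply: sr1].
by case: hMax => hMi _ _; apply: ((proper_one hD hMi).1 hpM).
Qed.

Definition polyR (K : fieldType) (R : K -> Prop) (p : {poly K}) := forall i, R p`_i.
Definition adj (K : fieldType) (R : K -> Prop) (x : K) : K -> Prop :=
  fun y => exists p, polyR R p /\ y = p.[x].

Lemma sr_sum (K : fieldType) (R : K -> Prop) (n : nat) (f : 'I_n -> K) :
  subring R -> (forall i, R (f i)) -> R (\sum_(i < n) f i).
Proof.
move=> hR hf; apply: sm_sum => //; [exact: sr0 | by move=> x y; apply: srD].
Qed.

Lemma sr_nat (K : fieldType) (R : K -> Prop) (b : bool) : subring R -> R (b%:R).
Proof. by case: b => hR; [apply: sr1 | apply: sr0]. Qed.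

Lemma polyR_mul (K : fieldType) (R : K -> Prop) p q :
  subring R -> polyR R p -> polyR R q -> polyR R (p * q).
Proof.
move=> hR hp hq i; rewrite coefM; apply: sr_sum => // j; exact: srM.
Qed.

Lemma adj_subring (K : fieldType) (R : K -> Prop) x :
  subring R -> subring (adj R x).
Proof.
move=> hR; split.
- exists 0; split; last by rewrite horner0.
  by move=> i; rewrite coef0; apply: sr0.
- exists 1; split; last by rewrite hornerC.
  by move=> i; rewrite coefC; case: ifP => _; [apply: sr1 | apply: sr0].
- move=> a b [p [hp ->]] [q [hq ->]]; exists (p - q); split.
    by move=> i; rewrite coefB; apply: srB.
  by rewrite hornerD hornerN.
- move=> a b [p [hp ->]] [q [hq ->]]; exists (p * q); split.
    exact: polyR_mul.
  by rewrite hornerM.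
Qed.

Lemma adj_ext (K : fieldType) (R : K -> Prop) x : subring R -> ksubset R (adj R x).
Proof.
move=> hR r hr; exists r%:P; split; last by rewrite hornerC.
by move=> i; rewrite coefC; case: ifP => _ //; apply: sr0.
Qed.

Lemma adj_x (K : fieldType) (R : K -> Prop) x : subring R -> adj R x x.
Proof.
move=> hR; exists 'X; split; last by rewrite hornerX.
by move=> i; rewrite coefX; apply: sr_nat.
Qed.

Lemma TL (K : fieldType) (I R : K -> Prop) x y :
  subring R -> I 0 -> prodm I (adj R x) y ->
  exists p, polyR (prodm I R) p /\ p.[x] = y.
Proof.
move=> hR hI0 [n [a [b [ha hb ->]]]]; elim: n => [|n IHn].
  exists 0; split; last by rewrite big_ord0 horner0.
  by move=> i; rewrite coef0; apply: prodm0 => //; apply: sr0.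
have [p [hp ep]] := IHn; have [q [hq eq]] := hb n.
exists (p + a n *: q); split.
  by move=> i; rewrite coefD coefZ; apply: prodm_add => //; apply: prodm_mul.
by rewrite big_ord_recr /= hornerD hornerZ ep eq.
Qed.

Definition jideal (K : fieldType) (R J : K -> Prop) :=
  [/\ subring R, ksubset J R, J 0, (forall a b, J a -> J b -> J (a + b))
    & (forall r a, R r -> J a -> J (r * a))].

Lemma jN (K : fieldType) (R J : K -> Prop) a : jideal R J -> J a -> J (- a).
Proof.
case=> hR _ _ _ hM ha; rewrite -mulN1r; apply: hM ha.
by apply: srN hR (sr1 hR).
Qed.

Lemma small (K : fieldType) (J : K -> Prop) (p : {poly K}) y :
  ~ J 1 -> (size p <= 1)%N -> polyR J p -> p.[y] = 1 -> False.
Proof.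
move=> hJ1 hs hp e; rewrite (size1_polyC hs) hornerC in e.
by apply: hJ1; rewrite -e; apply: hp.
Qed.

Lemma Qval (K : fieldType) (x : K) (q : {poly K}) m :
  x != 0 -> size q = m.+1 -> q.[x^-1] = 1 ->
  (\sum_(j < m.+1) q`_j *: 'X^(m - j)).[x] = x ^+ m.
Proof.
move=> x0 hs e.
have -> : x ^+ m = x ^+ m * q.[x^-1] by rewrite e mulr1.
rewrite (horner_coef q) hs mulr_sumr horner_sum.
apply: eq_bigr => j _; rewrite hornerZ hornerXn exprVn.
have hj : (j <= m)%N by rewrite -ltnS.
have -> : x ^+ m = x ^+ (m - j) * x ^+ j by rewrite -exprD subnK.
field; by rewrite expf_neq0.
Qed.

Lemma KL_step (K : fieldType) (R J : K -> Prop) x (p q : {poly K}) :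
  jideal R J -> x != 0 -> polyR J p -> polyR J q -> q.[x^-1] = 1 -> p.[x] = 1 ->
  (1 < size q)%N -> (size q <= size p)%N ->
  exists p', [/\ polyR J p', p'.[x] = 1 & (size p' < size p)%N].
Proof.
move=> hJ x0 hp hq eq ep hq1 hqp.
have [hR hJR hJ0 hJD hJM] := hJ.
set n := (size p).-1; set m := (size q).-1.
have hsq : size q = m.+1 by rewrite prednK //; lia.
have hsp : size p = n.+1 by rewrite prednK //; lia.
have hm1 : (0 < m)%N by lia.
have hmn : (m <= n)%N by lia.
set q0 := q`_0; set pn := p`_n.
set Q := \sum_(j < m.+1) q`_j *: 'X^(m - j).
set S := 'X^m - Q.
have hQ : Q.[x] = x ^+ m by apply: Qval.
have hS : S.[x] = 0 by rewrite /S hornerD hornerN hornerXn hQ subrr.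
have cS : forall k, S`_k = (k == m)%:R - \sum_(j < m.+1) q`_j * (k == (m - j)%N)%:R.
  move=> k; rewrite /S coefB coefXn /Q coef_sum; congr (_ - _).
  by apply: eq_bigr => j _; rewrite coefZ coefXn.
have RS : polyR R S.
  move=> k; rewrite cS; apply: srB => //; first exact: sr_nat.
  by apply: sr_sum => // j; apply: srM => //; [apply: hJR; apply: hq | apply: sr_nat].
have Sm : S`_m = 1 - q0.
  rewrite cS eqxx big_ord_recl /= subn0 eqxx mulr1 big1 ?addr0 // => i _.
  have -> : (m == m - i.+1)%N = false by apply/negbTE; lia.
  by rewrite mulr0.
have Sbig : forall k, (m < k)%N -> S`_k = 0.
  move=> k hk; rewrite cS.
  have -> : (k == m)%N = false by apply/negbTE; lia.
  rewrite big1 ?subr0 // => j _.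
  have -> : (k == m - j)%N = false by apply/negbTE; lia.
  by rewrite mulr0.
have hq0R : R q0 by apply: hJR; apply: hq.
exists ((1 - q0) *: p - pn *: ('X^(n - m) * S) + q0%:P); split.
- move=> i; rewrite coefD coefB !coefZ coefXnM coefC.
  apply: (hJD); last by case: ifP => _; [apply: hq | ].
  apply: (hJD); first by apply: (hJM); [apply: srB => //; apply: sr1 | apply: hp].
  apply: (jN hJ); rewrite mulrC; apply: (hJM); last exact: hp.
  by case: ifP => _; [apply: sr0 | apply: RS].
- rewrite !hornerD !hornerN !hornerZ hornerM hornerXn hS hornerC ep.
  by rewrite !mulr0 subr0 mulr1 subrK.
- rewrite hsp ltnS; apply/leq_sizeP => j hj.
  rewrite coefD coefB !coefZ coefXnM coefC.
  have -> : (j == 0)%N = false by apply/negbTE; lia.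
  have -> : (j < n - m)%N = false by apply/negbTE; lia.
  case: (eqVneq j n) => [->|jn].
    by rewrite subKn // Sm -/pn mulrC subrr addr0.
  rewrite nth_default ?hsp; last by lia.
  by rewrite Sbig ?mulr0 ?subrr ?addr0 //; lia.
Qed.

Lemma KL (K : fieldType) (R J : K -> Prop) :
  jideal R J -> ~ J 1 ->
  forall N x (p q : {poly K}), x != 0 -> (size p + size q <= N)%N ->
    polyR J p -> polyR J q -> p.[x] = 1 -> q.[x^-1] = 1 -> False.
Proof.
move=> hJ hJ1; elim=> [|N IH] x p q x0 hs hp hq ep eq.
  by apply: (small hJ1 _ hp ep); lia.
case: (leqP (size p) 1) => hp1; first exact: (small hJ1 hp1 hp ep).
case: (leqP (size q) 1) => hq1; first exact: (small hJ1 hq1 hq eq).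
case: (leqP (size q) (size p)) => hqp.
  have [p' [hp' ep' hs']] := KL_step hJ x0 hp hq eq ep hq1 hqp.
  by apply: (IH x p' q) => //; lia.
have x0' : x^-1 != 0 by rewrite invr_eq0.
have ep2 : p.[x^-1^-1] = 1 by rewrite invrK.
have [q' [hq' eq' hs']] := KL_step hJ x0' hq hp ep2 eq hp1 (ltnW hqp).
by apply: (IH x p q') => //; lia.
Qed.

Lemma chevalley (K : fieldType) (D F : K -> Prop) :
  subring D -> kideal D F -> ~ F 1 ->
  exists V, valuation_overring D V /\ ~ prodm F V 1.
Proof.
move=> hD hF hF1.
have hF0 : F 0 := sm0 hF.1.
pose P (R : K -> Prop) := [/\ subring R, ksubset D R & ~ prodm F R 1].
have hPD : P D.
  split => // h; apply: hF1; exact: (prodm_sub hF.1 (fun x h => h)) h.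
have [M [[hM hDM hM1] hmax]] : exists M, P M /\ forall B, P B -> (forall t, M t -> B t) -> B = M.
  apply: (zorn_sets hPD).
  move=> C hC htot [X1 hX1].
  have hcomb : forall x y, (exists X, C X /\ X x) -> (exists X, C X /\ X y) ->
      exists X, [/\ C X, X x & X y].
    move=> x y [X [hX hx]] [Y [hY hy]].
    by case: (htot X Y hX hY) => h; [exists Y; split => //; apply: h | exists X; split => //; apply: h].
  have hfin : forall n (b : nat -> K), (forall i, exists X, C X /\ X (b i)) ->
      exists X, C X /\ forall i, (i < n)%N -> X (b i).
    elim=> [|n IHn] b hb; first by exists X1; split => // i; rewrite ltn0.
    have [X [hX hXb]] := IHn b hb; have [Y [hY hYb]] := hb n.
    case: (htot X Y hX hY) => h.
      exists Y; split => // i; rewrite ltnS leq_eqVlt => /orP[/eqP -> //|hi].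
      by apply: h; apply: hXb.
    exists X; split => // i; rewrite ltnS leq_eqVlt => /orP[/eqP ->|hi].
      by apply: h.
    by apply: hXb.
  split.
  - split.
    + by exists X1; split => //; have [h _ _] := hC X1 hX1; apply: sr0.
    + by exists X1; split => //; have [h _ _] := hC X1 hX1; apply: sr1.
    + move=> x y hx hy; have [X [hX h1 h2]] := hcomb _ _ hx hy.
      by exists X; split => //; have [h _ _] := hC X hX; apply: srB.
    + move=> x y hx hy; have [X [hX h1 h2]] := hcomb _ _ hx hy.
      by exists X; split => //; have [h _ _] := hC X hX; apply: srM.
  - by move=> x hx; exists X1; split => //; have [_ h _] := hC X1 hX1; apply: h.
  - move=> [n [a [b [ha hb e]]]].
    have [X [hX hXb]] := hfin n b hb.
    have [hXs _ hX1'] := hC X hX; apply: hX1'.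
    exists n, a, (fun i => if (i < n)%N then b i else 0); split => //.
      by move=> i; case: ifP => h; [apply: hXb | apply: sr0].
    by rewrite e; apply: eq_bigr => i _; rewrite ltn_ord.
exists M; split; last exact: hM1.
split; first by split.
move=> x x0.
case: (classic (M x)) => hx; first by left.
case: (classic (M x^-1)) => hxi; first by right.
exfalso.
have hadj : forall y, ~ M y -> prodm F (adj M y) 1.
  move=> y hy; apply: NNPP => hn; apply: hy.
  have e : adj M y = M.
    apply: hmax; last exact: adj_ext.
    split => //; first exact: adj_subring.
    by move=> z /hDM; apply: adj_ext.
  by rewrite -e; apply: adj_x.
have [p [hp ep]] := TL hM hF0 (hadj x hx).
have [q [hq eq]] := TL hM hF0 (hadj _ hxi).
have hJ : jideal M (prodm F M).
  split => //.
  - by apply: prodm_sub; [exact: sr_submod | move=> z /hF.2 /hDM].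
  - by apply: prodm0 => //; apply: sr0.
  - by move=> a b; apply: prodm_add.
  - by move=> r a hr ha; rewrite mulrC; apply: prodm_mulr.
exact: (KL hJ hM1 x0 (leqnn (size p + size q)) hp hq ep eq).
Qed.

Lemma H6 (K : fieldType) (D : K -> Prop) st :
  subring D -> semistar D st ->
  (forall V, valuation_overring D V ->
      exists sV, [/\ semistar V sV, sV V = V & linked D st V sV]) -> P7 D st.
Proof.
move=> hD hst h4 I hI hn hp [s es].
split; first exact: st_le_D (kideal_Fbar hI hn) hI.2.
move=> e.
have hI1 : ~ I 1 by apply/(proper_one hD hI).
have [V [[[hV hDV] hval] hnot]] := chevalley hD hI hI1.
have [sV [hsV hVV hlink]] := h4 V (conj (conj hV hDV) hval).
have e2 := hlink I hI hn (ex_intro _ s es) e.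
have hne : exists y, y \in s /\ y != 0.
  by apply: (fspan_nonzero (R := D)); rewrite -es.
have [x [xs x0 hx]] := maxgen hV hval hne.
have hsub : ksubset (prodm I V) (kscale x V) by rewrite es; apply: prodm_scale.
have hxI : I x by rewrite es; apply: fspan_mem.
have hFb1 : Fbar V (prodm I V).
  split; first by apply: prodm_submod => //; apply: sm0 hI.1.
  by exists x; split => //; rewrite -[x]mulr1; apply: prodm_mul => //; apply: sr1.
have hFb2 : Fbar V (kscale x V).
  split; first exact: kscale_submod.
  by exists x; split => //; exists 1; split; [apply: sr1 | rewrite mulr1].
have hsc : sV (kscale x V) = kscale x V by rewrite (ss_scale hsV x0 (sr_Fbar hV)) hVV.
have h1 : sV (prodm I V) 1 by rewrite e2 hVV; apply: sr1.
have := ss_mono hsV hFb1 hFb2 hsub h1; rewrite hsc => -[w [hw ew]].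
by apply: hnot; rewrite ew; apply: prodm_mul.
Qed.

Theorem theorem3p9 (K : fieldType) (D : K -> Prop) (hD : domain_with_qf D)
  (st : (K -> Prop) -> (K -> Prop)) (hst : semistar D st) :
  [<->
   (* (i) *)
   (forall T, overring D T -> forall st', semistar T st' -> linked D st T st');
   (* (ii) *)
   (forall T, overring D T -> linked D st T (@d_op K));
   (* (iii) *)
   (forall T, overring D T -> linked D st T (t_op T));
   (* (iv) *)
   (forall V, valuation_overring D V ->
      exists sV, [/\ semistar V sV, sV V = V & linked D st V sV]);
   (* (v) *)
   (forall M, maximal_ideal D M -> nonzero M -> quasi_maximal D (star_f D st) M);
   (* (vi) *)
   (forall I, kideal D I -> nonzero I -> kproper D I ->
      kstrict_subset (star_f D st I) (st D));
   (* (vii) *)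
   (forall I, kideal D I -> nonzero I -> kproper D I -> fin_gen D I ->
      kstrict_subset (st I) (st D));
   (* (viii) *)
   (forall I, kideal D I -> nonzero I -> kproper D I ->
      star_f D st (prodm I (colon D I)) = st D ->
      kstrict_subset (star_f D st I) (st D))].
Proof.
have hDs := hD.1.
split; first by move=> h T hT; apply: h hT _ (d_semistar T).
split.
  move=> h T hT F hF hn hg e.
  by have := h T hT F hF hn hg e; rewrite /d_op => ->.
split; first exact: H5.
split; first by move=> h4; apply: H2 hDs hst (H6 hDs hst h4).
split; first exact: H7.
split; first exact: H8.
split; first by move=> h7 I hI hn hp _; exact: (H3 hDs hst h7 hI hn hp).
by move=> h8; apply: H1 hDs hst (H4 hDs hst h8).
Qed.
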